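(* For all Hessenberg spaces $H$ and $H'$ of $n\times n$ matrices, $X_{H+H'}=X_H\cup X_{H'}$, where for a Hessenberg space $K$ we set $X_K=\{[g]\in GL_n(\mathbb{C})/B: g^{-1}E_{1n}g\in K\}$.
   Context: $B$ is the group of invertible upper-triangular $n\times n$ complex matrices; $[g]$ denotes the flag whose $k$-dimensional subspace is spanned by the first $k$ columns of $g$. $E_{kl}$ is the matrix unit with $1$ in entry $(k,l)$. A Hessenberg space is a subspace of the form $H_h=\operatorname{span}\{E_{kl}: k\le h(l)\}$ for a nondecreasing function $h:\{1,\dots,n\}\to\{0,1,\dots,n\}$; $H+H'$ is the subspace spanned by $H\cup H'$ (again a Hessenberg space, spanned by the matrix units lying in $H$ or $H'$). *)

(* Defs.v *)
From HB Require Import structures.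
From mathcomp Require Import all_boot all_order all_algebra.
From mathcomp Require Import complex.
From mathcomp Require Import reals.
Set Implicit Arguments. Unset Strict Implicit. Unset Printing Implicit Defensive.
Import Order.TTheory GRing.Theory Num.Theory.
Local Open Scope ring_scope.

Definition Cx (R : realType) : fieldType := (R[i])%C.

Section Hess.
Variable F : fieldType.
Variable n : nat.

(* Hessenberg function, 0-indexed columns: h j = h(j+1) in the paper. *)
Definition hess_fun (h : 'I_n -> nat) : Prop :=
  (forall j k : 'I_n, (j <= k)%N -> (h j <= h k)%N) /\ (forall j, (h j <= n)%N).

(* H_h = span{E_kl : k <= h(l)}: entry (i,j) (0-indexed) may be nonzero
   only if i+1 <= h(j), i.e. i < h j. *)
Definition hess_space (h : 'I_n -> nat) (M : 'M[F]_n) : Prop :=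
  forall i j : 'I_n, ~~ (i < h j)%N -> M i j = 0.

Definition space_sum (H H' : 'M[F]_n -> Prop) (M : 'M[F]_n) : Prop :=
  exists A B, H A /\ H' B /\ M = A + B.

(* The flag [g]: its k-th member (k = 0..n) is the span of the first k
   columns of g, represented (via transposition) as the canonical row space
   of the matrix whose first k rows are the first k columns of g. *)
Definition flag_of (g : 'M[F]_n) : 'I_n.+1 -> 'M[F]_n :=
  fun k => (<< \matrix_(i < n, j < n) (if (i < k)%N then g j i else 0) >>)%MS.

Definition X_set (E : 'M[F]_n) (K : 'M[F]_n -> Prop) (Fl : 'I_n.+1 -> 'M[F]_n) : Prop :=
  exists g : 'M[F]_n, g \in unitmx /\ flag_of g = Fl /\ K (invmx g *m E *m g).

End Hess.

(* Main.v *)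
Require Import Defs.
From HB Require Import structures.
From mathcomp Require Import all_boot all_order all_algebra.
From mathcomp Require Import complex.
From mathcomp Require Import reals.
Local Open Scope ring_scope.
Import GRing.Theory.

Lemma entry_delta (F : fieldType) m (P Q : 'M[F]_m) a b i j :
  (P *m delta_mx a b *m Q) i j = P i a * Q b j.
Proof.
rewrite mxE (bigD1 b) //= big1 ?addr0.
  rewrite mxE (bigD1 a) //= big1 ?addr0; first by rewrite !mxE !eqxx mulr1.
  by move=> k /negbTE kb; rewrite mxE kb mulr0.
move=> k /negbTE kb; rewrite mxE big1 ?mul0r // => l _.
by rewrite mxE kb andbF mulr0.
Qed.

Lemma key (F : fieldType) m (h h' : 'I_m -> nat) (u v : 'I_m -> F)
  (M : 'M[F]_m) :
  hess_fun h -> hess_fun h' -> (forall i j, M i j = u i * v j) ->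
  space_sum (hess_space h) (hess_space h') M ->
  hess_space h M \/ hess_space h' M.
Proof.
move=> [hm _] [hm' _] HM [A [B [HA [HB EM]]]].
have [P1|NP1] := boolP [forall i : 'I_m, forall j : 'I_m, (i < h j)%N || (M i j == 0)].
  by left=> i j /negbTE hij; move/forallP: P1 => /(_ i)/forallP/(_ j);
     rewrite hij /= => /eqP.
have [P2|NP2] := boolP [forall i : 'I_m, forall j : 'I_m, (i < h' j)%N || (M i j == 0)].
  by right=> i j /negbTE hij; move/forallP: P2 => /(_ i)/forallP/(_ j);
     rewrite hij /= => /eqP.
exfalso.
move: NP1; rewrite negb_forall => /existsP [i1]; rewrite negb_forall => /existsP [j1].
rewrite negb_or => /andP [hi1 nz1].
move: NP2; rewrite negb_forall => /existsP [i2]; rewrite negb_forall => /existsP [j2].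
rewrite negb_or => /andP [hi2 nz2].
move: nz1 nz2; rewrite !HM !mulf_eq0 !negb_or => /andP [u1 v1] /andP [u2 v2].
pose i := if (i1 <= i2)%N then i2 else i1.
pose j := if (j1 <= j2)%N then j1 else j2.
have ui : u i != 0 by rewrite /i; case: ifP.
have vj : v j != 0 by rewrite /j; case: ifP.
have : M i j != 0 by rewrite HM mulf_neq0.
rewrite -leqNgt in hi1; rewrite -leqNgt in hi2.
have ii1 : (i1 <= i)%N by rewrite /i; case: (leqP i1 i2) => H //; apply: ltnW.
have ii2 : (i2 <= i)%N by rewrite /i; case: (leqP i1 i2) => H //; apply: ltnW.
have jj1 : (j <= j1)%N by rewrite /j; case: (leqP j1 j2) => H //; apply: ltnW.
have jj2 : (j <= j2)%N by rewrite /j; case: (leqP j1 j2) => H //; apply: ltnW.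
have g1 : ~~ (i < h j)%N.
  by rewrite -leqNgt (leq_trans (hm _ _ jj1)) // (leq_trans hi1).
have g2 : ~~ (i < h' j)%N.
  by rewrite -leqNgt (leq_trans (hm' _ _ jj2)) // (leq_trans hi2).
by rewrite EM mxE HA // HB // addr0 eqxx.
Qed.

(* n.+1 x n.+1 matrices (n.+1 >= 1); E_{1n} = delta_mx ord0 ord_max. *)
Theorem mainTheorem6 (R : realType) (n : nat) (h h' : 'I_n.+1 -> nat) :
  hess_fun h -> hess_fun h' ->
  forall Fl : 'I_n.+2 -> 'M[Cx R]_n.+1,
    X_set (delta_mx ord0 ord_max)
          (space_sum (hess_space h) (hess_space h')) Fl
    <-> X_set (delta_mx ord0 ord_max) (hess_space h) Fl
        \/ X_set (delta_mx ord0 ord_max) (hess_space h') Fl.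
Proof.
move=> Hh Hh' Fl; split.
  move=> [g [gu [fg HS]]].
  have [H1|H2] := key _ _ _ _ _ _ _ Hh Hh' (fun i j => entry_delta _ _ _ _ _ _ i j) HS.
    by left; exists g.
  by right; exists g.
move=> [[g [gu [fg HS]]]|[g [gu [fg HS]]]]; exists g; split => //; split => //.
  by exists (invmx g *m delta_mx ord0 ord_max *m g), 0; rewrite addr0; split => //; split => // i j _; rewrite mxE.
exists 0, (invmx g *m delta_mx ord0 ord_max *m g); rewrite add0r; split; first by move=> i j _; rewrite mxE.
by split.
Qed.
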